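(* Let $\mathcal E$ be a nest on a complex Banach space $X$ and let $\Phi$ be a support function on $\mathcal E$ with $\Phi(\{0\})=\{0\}$. Then: (i) $\mathcal M(\Phi)=\mathcal M(\Phi_-)$; (ii) $\Phi_{\mathcal M(\Phi)}=\Phi_-$; (iii) if $\Phi$ is admissible, then $\Phi_{\mathcal M(\Phi)}=\Phi$.
   Context: A nest $\mathcal E$ on $X$ is a family of closed linear subspaces of $X$, totally ordered by inclusion, containing $\{0\}$ and $X$, closed under arbitrary meets $\wedge$ (intersections) and joins $\vee$ (norm-closed linear spans of unions). For $E\in\mathcal E$, $E_-=\vee\{F\in\mathcal E: F\subsetneq E\}$. A support function on $\mathcal E$ is an inclusion-preserving map $\Phi:\mathcal E\to\mathcal E$; it is admissible if for every $N\in\mathcal E\setminus\{\{0\}\}$, $\vee_{E\in\mathcal E,E\subsetneq N}\Phi(E)=\Phi(N_-)$. For a support function $\Phi$, $\Phi_-$ is defined by $\Phi_-(\{0\})=\Phi(\{0\})$ and, for $E\neq\{0\}$, $\Phi_-(E)=\Phi(E)$ if $E_-\subsetneq E$ and $\Phi_-(E)=\vee_{F\in\mathcal E,F\subsetneq E}\Phi(F)$ if $E_-=E$ (it is the greatest admissible support function below $\Phi$ in the pointwise inclusion order). $\mathcal M(\Phi)=\{T\in\mathcal B(X): TE\subseteq\Phi(E)\ \forall E\in\mathcal E\}$; it is a bimodule over the nest algebra $\mathcal T(\mathcal E)=\{T\in\mathcal B(X): TE\subseteq E\ \forall E\in\mathcal E\}$. For a $\mathcal T(\mathcal E)$-bimodule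 $\mathcal J$ (a linear subspace of $\mathcal B(X)$ with $\mathcal T(\mathcal E)\mathcal J,\mathcal J\mathcal T(\mathcal E)\subseteq\mathcal J$), $\Phi_{\mathcal J}(E)=[\mathcal JE]$, the norm-closed linear span of $\{Tx:T\in\mathcal J,x\in E\}$. *)

(* Defs.v *)
(* Complex scalars are R[i] for R : realType
   (the complex numbers of mathcomp-real-closed); a complex Banach space is
   a completeNormedModType over R[i]. *)
From mathcomp Require Import all_boot all_order all_algebra.
From mathcomp Require Import complex.
From mathcomp Require Import all_classical all_reals all_analysis.
Import numFieldNormedType.Exports.

Set Implicit Arguments.
Unset Strict Implicit.
Unset Printing Implicit Defensive.

Local Open Scope classical_set_scope.
Local Open Scope ring_scope.

Section NestDefs.
Context {R : realType} {X : completeNormedModType (R[i])}.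

Definition subspace (V : set X) : Prop :=
  V 0 /\ (forall x y, V x -> V y -> V (x + y)) /\
  (forall (a : R[i]) x, V x -> V (a *: x)).

Definition closed_subspace (V : set X) : Prop := subspace V /\ closed V.

Definition cspan (S : set X) : set X :=
  \bigcap_(V in [set V | closed_subspace V /\ S `<=` V]) V.

Definition is_nest (N : set (set X)) : Prop :=
  (forall E, N E -> closed_subspace E) /\
  (forall E F, N E -> N F -> E `<=` F \/ F `<=` E) /\
  N [set 0] /\ N setT /\
  (forall F : set (set X), F `<=` N -> N (\bigcap_(E in F) E)) /\
  (forall F : set (set X), F `<=` N -> N (cspan (\bigcup_(E in F) E))).

Definition strict_below (N : set (set X)) (E : set X) : set (set X) :=
  [set F | N F /\ F `<=` E /\ F <> E].

Definition nest_minus (N : set (set X)) (E : set X) : set X :=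
  cspan (\bigcup_(F in strict_below N E) F).

Definition support_function (N : set (set X)) (Phi : set X -> set X) : Prop :=
  (forall E, N E -> N (Phi E)) /\
  (forall E F, N E -> N F -> E `<=` F -> Phi E `<=` Phi F).

Definition admissible (N : set (set X)) (Phi : set X -> set X) : Prop :=
  forall Nn, N Nn -> Nn <> [set 0] ->
    cspan (\bigcup_(E in strict_below N Nn) Phi E) = Phi (nest_minus N Nn).

Definition phi_minus (N : set (set X)) (Phi : set X -> set X) (E : set X)
  : set X :=
  if `[< E = [set 0] >] then Phi E
  else if `[< nest_minus N E <> E >] then Phi E
  else cspan (\bigcup_(F in strict_below N E) Phi F).

(* bounded (= continuous) linear operators on X *)
Definition bounded_op (T : X -> X) : Prop :=
  (forall (a : R[i]) x y, T (a *: x + y) = a *: T x + T y) /\ continuous T.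

Definition Mphi (N : set (set X)) (Phi : set X -> set X) : set (X -> X) :=
  [set T | bounded_op T /\ forall E, N E -> T @` E `<=` Phi E].

Definition Phi_of (J : set (X -> X)) (E : set X) : set X :=
  cspan [set y | exists2 T, J T & exists2 x, E x & y = T x].

End NestDefs.

(* Main.v *)
Require Import Defs.
From mathcomp Require Import all_boot all_order all_algebra.
From mathcomp Require Import complex.
From mathcomp Require Import all_classical all_reals all_analysis.
From mathcomp Require Import ring lra.
Import numFieldNormedType.Exports.
Import Order.TTheory GRing.Theory Num.Theory.
Local Open Scope classical_set_scope.
Local Open Scope ring_scope.

Section HB.
Local Open Scope complex_scope.
Local Set Implicit Arguments.
Local Unset Strict Implicit.
Context {R : realType} {X : completeNormedModType (R[i])}.

Definition nx (x : X) : R := complex.Re `|x|.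
Definition rsc (t : R) (x : X) : X := t%:C *: x.

Lemma normE (x : X) : `|x| = (nx x)%:C.
Proof. by rewrite /nx RRe_real // normr_real. Qed.

Lemma normC_real (r : R) : `|r%:C| = `|r|%:C.
Proof. by rewrite normc_def /= expr0n /= addr0 sqrtr_sqr. Qed.

Lemma nx_ge0 x : 0 <= nx x.
Proof. by have := normr_ge0 x; rewrite normE ler0c. Qed.

Lemma nxD x y : nx (x + y) <= nx x + nx y.
Proof. by rewrite -lecR rmorphD /= -!normE ler_normD. Qed.

Lemma nx_rsc t x : nx (rsc t x) = `|t| * nx x.
Proof. by apply: complexI; rewrite rmorphM /= -!normE -normC_real normrZ. Qed.

Lemma nxN x : nx (- x) = nx x.
Proof. by rewrite /nx normrN. Qed.

Lemma nx0 : nx 0 = 0.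
Proof. by rewrite /nx normr0. Qed.

Lemma rsc0 x : rsc 0 x = 0. Proof. by rewrite /rsc rmorph0 scale0r. Qed.
Lemma rsc1 x : rsc 1 x = x. Proof. by rewrite /rsc rmorph1 scale1r. Qed.
Lemma rscA s t x : rsc s (rsc t x) = rsc (s * t) x.
Proof. by rewrite /rsc scalerA rmorphM. Qed.
Lemma rscDl s t x : rsc (s + t) x = rsc s x + rsc t x.
Proof. by rewrite /rsc rmorphD scalerDl. Qed.
Lemma rscDr t x y : rsc t (x + y) = rsc t x + rsc t y.
Proof. by rewrite /rsc scalerDr. Qed.
Lemma rscNl t x : rsc (- t) x = - rsc t x.
Proof. by rewrite /rsc rmorphN scaleNr. Qed.
Lemma rscNr t x : rsc t (- x) = - rsc t x.
Proof. by rewrite /rsc scalerN. Qed.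

Definition good (G : set (X * R)) : Prop :=
  [/\ G (0, 0), (forall y a z b, G (y, a) -> G (z, b) -> G (y + z, a + b)),
   (forall t y a, G (y, a) -> G (rsc t y, t * a)) &
   (forall y a, G (y, a) -> a <= nx y)].

Lemma extend H x0 : good H ->
  exists H', [/\ good H', H `<=` H' & exists c, H' (x0, c)].
Proof.
move=> [H0 HD HZ HN].
have U0 : forall y a z b, H (y,a) -> H (z,b) -> a - nx (y - x0) <= nx (z + x0) - b.
  move=> y a z b Hya Hzb; have := HN _ _ (HD _ _ _ _ Hya Hzb).
  have := nxD (y - x0) (z + x0).
  have -> : y - x0 + (z + x0) = y + z by rewrite addrACA addNr addr0.
  lra.
pose S := [set r | exists y a, H (y,a) /\ r = a - nx (y - x0)].
have hS : has_sup S.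
  split; first by exists (0 - nx (0 - x0)); exists 0, 0.
  by exists (nx (0 + x0) - 0) => r [y [a [Hya ->]]]; exact: U0.
pose c := sup S.
have U : forall z b, H (z,b) -> b + c <= nx (z + x0).
  move=> z b Hzb; have : c <= nx (z + x0) - b.
    apply: ge_sup; first by case: hS.
    by move=> r [y [a [Hya ->]]]; exact: U0.
  lra.
have L : forall y a, H (y,a) -> a - c <= nx (y - x0).
  move=> y a Hya; have : a - nx (y - x0) <= c.
    by apply: sup_upper_bound => //; exists y, a.
  lra.
exists [set p | exists y a t, H (y,a) /\ p = (y + rsc t x0, a + t * c)].
split.
- split.
  + by exists 0, 0, 0; split => //; rewrite rsc0 addr0 mul0r addr0.
  + move=> _ _ _ _ [y1 [a1 [t1 [H1 [-> ->]]]]] [y2 [a2 [t2 [H2 [-> ->]]]]].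
    exists (y1 + y2), (a1 + a2), (t1 + t2); split; first exact: HD.
    congr pair; first by rewrite rscDl addrACA.
    ring.
  + move=> s _ _ [y [a [t [Hya [-> ->]]]]].
    exists (rsc s y), (s * a), (s * t); split; first exact: HZ.
    congr pair; first by rewrite rscDr rscA.
    ring.
  + move=> _ _ [y [a [t [Hya [-> ->]]]]].
    have [tlt|tgt|->] := ltgtP t 0; last by rewrite rsc0 addr0 mul0r addr0; exact: HN.
    * pose u := - t; have u0 : 0 < u by rewrite /u oppr_gt0.
      have := L _ _ (HZ u^-1 _ _ Hya).
      have -> : y + rsc t x0 = rsc u (rsc u^-1 y - x0).
        rewrite rscDr rscA mulfV ?gt_eqF // rsc1 rscNr -rscNl /u opprK //.
      rewrite nx_rsc gtr0_norm // => h.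
      have := ler_wpM2l (ltW u0) h.
      rewrite mulrBr mulrA mulfV ?gt_eqF // mul1r /u; lra.
    * have := U _ _ (HZ t^-1 _ _ Hya).
      have -> : y + rsc t x0 = rsc t (rsc t^-1 y + x0).
        by rewrite rscDr rscA mulfV ?gt_eqF // rsc1.
      rewrite nx_rsc gtr0_norm // => h.
      have := ler_wpM2l (ltW tgt) h.
      rewrite mulrDr mulrA mulfV ?gt_eqF // mul1r; lra.
- move=> [y a] Hya; exists y, a, 0; split => //.
  by rewrite rsc0 addr0 mul0r addr0.
- by exists c, 0, 0, 1; split => //; rewrite rsc1 add0r mul1r add0r.
Qed.

Lemma HB_total G0 : good G0 ->
  exists H, [/\ good H, G0 `<=` H & forall z, exists a, H (z, a)].
Proof.
move=> gG0.
have [|A [PA Amax]] := @Zorn_bigcup _ (fun A => good (G0 `|` A)).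
  move=> F FP Ftot.
  pose U := G0 `|` \bigcup_(A in F) A.
  have two : forall p q, U p -> U q ->
      exists K, [/\ good K, K `<=` U, K p & K q].
    have gA : forall A, F A -> good (G0 `|` A) /\ G0 `|` A `<=` U.
      move=> A FA; split; first exact: FP.
      by move=> r [G0r|Ar]; [left|right; exists A].
    move=> p q [G0p|[A1 FA1 A1p]] [G0q|[A2 FA2 A2q]].
    - by exists G0; split => // r G0r; left.
    - have [g s] := gA _ FA2; exists (G0 `|` A2); split => //; [left|right] => //.
    - have [g s] := gA _ FA1; exists (G0 `|` A1); split => //; [right|left] => //.
    - have [A12|A21] := Ftot _ _ FA1 FA2.
      + have [g s] := gA _ FA2; exists (G0 `|` A2); split => //; right => //.
        exact: A12.
      + have [g s] := gA _ FA1; exists (G0 `|` A1); split => //; right => //.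
        exact: A21.
  split.
  - by left; case: gG0.
  - move=> y a z b Hp Hq; have [K [[_ KD _ _] sK Kp Kq]] := two _ _ Hp Hq.
    exact/sK/KD.
  - move=> t y a Hp; have [K [[_ _ KZ _] sK Kp _]] := two _ _ Hp Hp.
    exact/sK/KZ.
  - move=> y a Hp; have [K [[_ _ _ KN] sK Kp _]] := two _ _ Hp Hp.
    exact: KN.
exists (G0 `|` A); split; [exact: PA | by move=> p G0p; left | ].
move=> z; have [H' [gH' sH' [c Hc]]] := extend z PA.
have sH'A : H' `<=` A.
  apply: contrapT => nsub; apply: (Amax H'); last first.
    have -> : G0 `|` H' = H' => //.
    by apply/seteqP; split => p; [case=> // G0p; apply: sH'; left|right].
  by split => // p Ap; apply: sH'; right.
by exists c; right; apply: sH'A.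
Qed.

Lemma real_functional G0 : good G0 ->
  exists g : X -> R, [/\ forall y a, G0 (y, a) -> g y = a,
    forall u v, g (u + v) = g u + g v,
    forall t u, g (rsc t u) = t * g u & forall u, g u <= nx u].
Proof.
move=> /HB_total [H [[H0 HD HZ HN] sG0 tot]].
have [g Hg] := choice tot.
have uniq : forall y a b, H (y, a) -> H (y, b) -> a = b.
  move=> y a b Ha Hb.
  have h1 := HN _ _ (HD _ _ _ _ Ha (HZ (-1) _ _ Hb)).
  have h2 := HN _ _ (HD _ _ _ _ Hb (HZ (-1) _ _ Ha)).
  move: h1 h2; rewrite rscNl rsc1 subrr nx0; lra.
exists g; split.
- by move=> y a /sG0 Ha; apply: uniq (Hg y) Ha.
- by move=> u v; apply: uniq (Hg _) (HD _ _ _ _ (Hg u) (Hg v)).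
- by move=> t u; apply: uniq (Hg _) (HZ t _ _ (Hg u)).
- by move=> u; exact: HN (Hg u).
Qed.

Lemma dist_pos (F : set X) x : closed F -> ~ F x ->
  exists2 d : R, 0 < d & forall u, F u -> d <= nx (x - u).
Proof.
move=> cF nFx.
have [B nB FB0] : exists2 B, nbhs x B & forall u, F u -> ~ B u.
  apply: contrapT => h; apply: nFx; apply: cF => B nB.
  apply: contrapT => h2; apply: h; exists B => // u Fu Bu; by apply: h2; exists u.
move: nB => /nbhs_ballP [e /= e0 eB]; rewrite -ball_normE in eB.
have ee : e = (complex.Re e)%:C.
  by move: e0; case: e {eB} => a b; rewrite ltcE /= => /andP[/eqP -> _].
exists (complex.Re e); first by rewrite -ltcR -ee.
move=> u Fu; rewrite leNgt; apply/negP => h; apply: (FB0 u Fu); apply: eB.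
by rewrite /= normE ee ltcR.
Qed.

Lemma normi : `|'i%C : R[i]| = 1.
Proof. by rewrite normc_def /= expr0n expr1n add0r sqrtr1. Qed.

Lemma sep (F : set X) x : closed_subspace F -> ~ F x ->
  exists f : X -> R[i], [/\ forall a u v, f (a *: u + v) = a * f u + f v,
    forall z, F z -> f z = 0, f x = 1 &
    exists2 C, 0 <= C & forall z, `|f z| <= C * `|z|].
Proof.
move=> [[F0 [FD FZ]] cF] nFx.
have [d d0 hd] := dist_pos cF nFx.
pose G0 := [set p | exists w t, F w /\ p = (w + rsc t x, t * d)].
have gG0 : good G0.
  split.
  - by exists 0, 0; split => //; rewrite rsc0 addr0 mul0r.
  - move=> _ _ _ _ [w1 [t1 [F1 [-> ->]]]] [w2 [t2 [F2 [-> ->]]]].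
    exists (w1 + w2), (t1 + t2); split; first exact: FD.
    by congr pair; [rewrite rscDl addrACA | ring].
  - move=> s _ _ [w [t [Fw [-> ->]]]]; exists (rsc s w), (s * t).
    by split; [exact: FZ | congr pair; [rewrite rscDr rscA | ring]].
  - move=> _ _ [w [t [Fw [-> ->]]]].
    have [tle|tgt] := lerP t 0.
      have := nx_ge0 (w + rsc t x); nra.
    have := hd (rsc (- t^-1) w) (FZ _ _ Fw).
    have -> : x - rsc (- t^-1) w = rsc t^-1 w + x by rewrite rscNl opprK addrC.
    have -> : w + rsc t x = rsc t (rsc t^-1 w + x).
      by rewrite rscDr rscA mulfV ?gt_eqF // rsc1.
    rewrite nx_rsc gtr0_norm // => h.
    by have := ler_wpM2l (ltW tgt) h.
have [g [g0 gD gZ gN]] := real_functional gG0.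
have gF : forall w, F w -> g w = 0.
  move=> w Fw; apply: g0; exists w, 0; split => //.
  by rewrite rsc0 addr0 mul0r.
have gx : g x = d.
  by apply: g0; exists 0, 1; split => //; rewrite add0r rsc1 mul1r.
have gN' : forall u, g (- u) = - g u.
  move=> u; have -> : - u = rsc (-1) u by rewrite rscNl rsc1.
  by rewrite gZ mulN1r.
have gabs : forall u, `|g u| <= nx u.
  move=> u; rewrite ler_norml; apply/andP; split; last exact: gN.
  have := gN (- u); rewrite gN' nxN; lra.
have hi : 'i%C * 'i%C = -1 :> R[i] by rewrite -expr2 sqr_i.
pose f0 u := (g u)%:C - 'i%C * (g ('i%C *: u))%:C.
have f0D : forall u v, f0 (u + v) = f0 u + f0 v.
  by move=> u v; rewrite /f0 scalerDr !gD !rmorphD /=; ring.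
have f0R : forall (t : R) u, f0 (t%:C *: u) = t%:C * f0 u.
  move=> t u; rewrite /f0.
  have -> : 'i%C *: (t%:C *: u) = t%:C *: ('i%C *: u) by rewrite !scalerA mulrC.
  have := gZ t u; rewrite /rsc => ->.
  have := gZ t ('i%C *: u); rewrite /rsc => ->.
  by rewrite !rmorphM /=; ring.
have f0i : forall u, f0 ('i%C *: u) = 'i%C * f0 u.
  move=> u; rewrite /f0 scalerA hi scaleN1r gN' rmorphN.
  by rewrite mulrBr mulrA hi; ring.
have f0lin : forall a u v, f0 (a *: u + v) = a * f0 u + f0 v.
  move=> a u v; rewrite f0D; congr (_ + _).
  have -> : a *: u = (complex.Re a)%:C *: u + 'i%C *: ((complex.Im a)%:C *: u).
    by rewrite scalerA -scalerDl -complexE.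
  by rewrite f0D f0R f0i f0R mulrA -mulrDl -complexE.
have f0F : forall w, F w -> f0 w = 0.
  move=> w Fw; have Fi : F ('i%C *: w) := FZ _ _ Fw.
  by rewrite /f0 (gF _ Fw) (gF _ Fi) rmorph0 mulr0 subr0.
have f0x : f0 x != 0.
  apply/negP => /eqP h; have := congr1 (@complex.Re R) h.
  rewrite /f0 gx /= mul0r mul1r subr0 subr0 => d00; move: d0; rewrite d00; lra.
have nxi : forall z, nx ('i%C *: z) = nx z.
  by move=> z; rewrite /nx normrZ normi mul1r.
have f0b : forall z, `|f0 z| <= 2%:R * `|z|.
  move=> z; rewrite /f0; apply: le_trans (ler_normB _ _) _.
  rewrite normrM !normC_real normE normi mul1r -rmorphD /=.
  rewrite -(rmorph_nat (real_complex R)) -rmorphM lecR.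
  have := gabs z; have := gabs ('i%C *: z); rewrite nxi; lra.
pose f u := f0 u / f0 x.
exists f; split.
- by move=> a u v; rewrite /f f0lin mulrDl mulrA.
- by move=> z Fz; rewrite /f f0F // mul0r.
- by rewrite /f mulfV.
- exists (2%:R / `|f0 x|); first by rewrite divr_ge0 // ler0n.
  move=> z; rewrite /f normrM normfV mulrAC.
  by apply: ler_wpM2r; [rewrite invr_ge0 | exact: f0b].
Qed.

Lemma rank_one (F : set X) x y : closed_subspace F -> ~ F x ->
  exists T : X -> X, [/\ bounded_op T, forall z, F z -> T z = 0, T x = y &
    forall z, exists a : R[i], T z = a *: y].
Proof.
move=> cF nFx; have [f [flin fF fx [C C0 fb]]] := sep cF nFx.
exists (fun z => f z *: y); split.
- split; first by move=> a u v; rewrite flin scalerDl scalerA.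
  move=> z; apply/cvgrPdist_lt => e e0.
  pose K := C * `|y| + 1.
  have K0 : 0 < K.
    rewrite /K; apply: (@lt_le_trans _ _ 1); first exact: ltr01.
    by rewrite lerDr mulr_ge0.
  have d0 : 0 < e / K by rewrite divr_gt0.
  have := @near_ball _ X z _ d0; rewrite -ball_normE /=; apply: filterS => t ht.
  have -> : f z *: y - f t *: y = f (z - t) *: y.
    rewrite -scalerBl; congr (_ *: _).
    have h := flin (-1) t z; rewrite scaleN1r mulN1r in h.
    by rewrite [z - t]addrC h addrC.
  rewrite normrZ.
  apply: (le_lt_trans (ler_wpM2r (normr_ge0 y) (fb (z - t)))).
  apply: (@le_lt_trans _ _ (K * `|z - t|)).
    by rewrite /K mulrAC mulrDl mul1r lerDl.
  have -> : e = K * (e / K) by rewrite mulrC divfK // gt_eqF.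
  by rewrite ltr_pM2l.
- by move=> w Fw; rewrite fF // scale0r.
- by rewrite fx scale1r.
- by move=> w; exists (f w).
Qed.

Lemma cspan_cs (S : set X) : closed_subspace (cspan S).
Proof.
split.
- split; first by move=> V [[[V0 _] _] _].
  split.
    move=> x y hx hy V DV; have [[[_ [VD _]] _] _] := DV.
    by apply: VD; [exact: hx|exact: hy].
  by move=> a x hx V DV; have [[[_ [_ VZ]] _] _] := DV; apply: VZ; exact: hx.
- by apply: closed_bigI => V [[_ cV] _].
Qed.

Lemma sub_cspan (S : set X) : S `<=` cspan S.
Proof. by move=> x Sx V [_ SV]; apply: SV. Qed.

Lemma cspan_min (S V : set X) : closed_subspace V -> S `<=` V -> cspan S `<=` V.
Proof. by move=> cV SV x; apply; split. Qed.

Lemma bop0 (T : X -> X) : bounded_op T -> T 0 = 0.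
Proof.
move=> [lin _]; have := lin 1 0 0; rewrite !scale1r !addr0 => h.
by apply: (addrI (T 0)); rewrite addr0 -h.
Qed.

Lemma cspan_op (T : X -> X) (S : set X) :
  bounded_op T -> T @` cspan S `<=` cspan (T @` S).
Proof.
move=> bT; have T0 := bop0 bT; case: bT => lin cT.
have TD : forall x y, T (x + y) = T x + T y.
  by move=> x y; rewrite -[x in T (x + _)]scale1r lin scale1r.
have TZ : forall a x, T (a *: x) = a *: T x.
  by move=> a x; rewrite -[a *: x]addr0 lin T0 addr0.
have : cspan S `<=` T @^-1` cspan (T @` S).
  apply: cspan_min; last by move=> x Sx; apply: sub_cspan; exists x.
  have [[C0 [CD CZ]] cC] := cspan_cs (T @` S).
  split; first split.
  - by rewrite /preimage /= T0.
  - split.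
      by move=> x y hx hy; rewrite /preimage /= TD; exact: CD.
    by move=> a x hx; rewrite /preimage /= TZ; exact: CZ.
  - by apply: preimage_closed => // x _; exact: cT.
by move=> sub _ [x hx <-]; apply: sub.
Qed.

End HB.

Theorem mainTheorem5 (R : realType) (X : completeNormedModType (R[i]))
  (N : set (set X)) (Phi : set X -> set X) :
  is_nest N -> support_function N Phi -> Phi [set 0] = [set 0] ->
  [/\ Mphi N Phi = Mphi N (phi_minus N Phi),
      (forall E, N E -> Phi_of (Mphi N Phi) E = phi_minus N Phi E) &
      (admissible N Phi ->
         forall E, N E -> Phi_of (Mphi N Phi) E = Phi E)].
Proof.
move=> nN sPhi Phi0.
case: nN => Ncs [Ntot [N0 [NT [Nmeet Njoin]]]].
case: sPhi => PhiN Phimono.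
have pm_cases : forall E, [\/ E = [set 0] /\ phi_minus N Phi E = Phi E,
   [/\ E <> [set 0], nest_minus N E <> E & phi_minus N Phi E = Phi E] |
   [/\ E <> [set 0], nest_minus N E = E &
      phi_minus N Phi E = cspan (\bigcup_(F in strict_below N E) Phi F)]].
  move=> E; rewrite /phi_minus.
  have [E0|E0] := pselect (E = [set 0]); first by rewrite asboolT //; constructor 1.
  rewrite asboolF //; have [Em|Em] := pselect (nest_minus N E <> E).
    by rewrite asboolT //; constructor 2.
  by rewrite asboolF //; constructor 3; split => //; apply: contrapT.
have pm_sub : forall E, N E -> phi_minus N Phi E `<=` Phi E.
  move=> E NE; case: (pm_cases E) => [[_ ->]|[_ _ ->]|[_ _ ->]] //.
  apply: cspan_min; first exact: Ncs (PhiN E NE).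
  by move=> z [F [NF [FE _]] Fz]; apply: (Phimono F E NF NE FE).
have pm_cs : forall E, N E -> closed_subspace (phi_minus N Phi E).
  move=> E NE; case: (pm_cases E) => [[_ ->]|[_ _ ->]|[_ _ ->]];
    [exact: Ncs (PhiN E NE)|exact: Ncs (PhiN E NE)|exact: cspan_cs].
have part1 : Mphi N Phi = Mphi N (phi_minus N Phi).
  apply/seteqP; split => T [bT hT]; split => // E NE.
  - case: (pm_cases E) => [[_ ->]|[_ _ ->]|[_ Em ->]]; try exact: hT.
    have sub1 := cspan_op (S := \bigcup_(F in strict_below N E) F) bT.
    move=> _ [x Ex <-]; rewrite -Em in Ex.
    have h := sub1 _ (ex_intro2 _ _ x Ex erefl).
    apply: (cspan_min (cspan_cs _) _ h).
    move=> _ [z [F sbF Fz] <-]; apply: sub_cspan; exists F => //.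
    by apply: (hT F sbF.1); exists z.
  - by move=> _ [x Ex <-]; apply: pm_sub => //; apply: hT => //; exists x.
have exdiff : forall E F : set X, F `<=` E -> F <> E -> exists x, E x /\ ~ F x.
  move=> E F FE FnE; apply: contrapT => h; apply: FnE; apply/seteqP; split => // x Ex.
  by apply: contrapT => nFx; apply: h; exists x.
have KEY : forall E F (Y : set X), closed_subspace F -> F `<=` E -> F <> E ->
    (forall G, N G -> G `<=` F \/ Y `<=` Phi G) -> Y `<=` Phi_of (Mphi N Phi) E.
  move=> E F Y cF FE FnE hG y Yy.
  have [x [Ex nFx]] := exdiff E F FE FnE.
  have [T [bT TF Tx Ty]] := rank_one y cF nFx.
  apply: sub_cspan; exists T; last by exists x; rewrite ?Tx.
  split => // G NG _ [z Gz <-].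
  have [[P0 [PD PZ]] _] := Ncs _ (PhiN G NG).
  case: (hG G NG) => [GF|YG]; first by rewrite TF //; apply: GF.
  by have [a ->] := Ty z; apply: PZ; apply: YG.
have part2 : forall E, N E -> Phi_of (Mphi N Phi) E = phi_minus N Phi E.
  move=> E NE; apply/seteqP; split.
  - apply: cspan_min; first exact: pm_cs.
    move=> _ [T MT [x Ex ->]].
    have : Mphi N (phi_minus N Phi) T by rewrite -part1.
    by case=> _ h; apply: (h E NE); exists x.
  - case: (pm_cases E) => [[E0 ->]|[E0 Em ->]|[E0 Em ->]].
    + rewrite E0 Phi0 => z ->; exact: (cspan_cs _).1.1.
    + apply: (KEY E (nest_minus N E)); first exact: cspan_cs.
      * apply: cspan_min; first exact: Ncs.
        by move=> z [F [_ [FE _]] Fz]; apply: FE.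
      * exact: Em.
      * move=> G NG; have [GE|EG] := Ntot G E NG NE.
          have [GeE|GnE] := pselect (G = E); first by right; rewrite GeE.
          by left => z Gz; apply: sub_cspan; exists G.
        by right; apply: Phimono.
    + apply: cspan_min; first exact: cspan_cs.
      move=> y [F [NF [FE FnE]] Fy].
      apply: (KEY E F (Phi F)) => //; first exact: Ncs.
      move=> G NG; have [GF|FG] := Ntot G F NG NF; [by left | by right; apply: Phimono].
split => //.
move=> adm E NE; rewrite part2 //.
case: (pm_cases E) => [[_ ->]|[_ _ ->]|[E0 Em ->]] //.
by rewrite (adm E NE E0) Em.
Qed.
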